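(* Let $n\ge 6$ and let $K_n$ be a random linear embedding of the complete graph on $n$ vertices in $C^3$. Then the mean sum of squared linking numbers of $K_n$ equals $$\frac{q}{16}\sum_{k=3}^{n-3}\sum_{l=3}^{n-k}\frac{n!}{(n-k-l)!}=\frac{q}{16}\sum_{i=6}^{n}\frac{n!}{(n-i)!}(i-5),$$ where $q$ is the constant defined in the context.
   Context: A random linear embedding of a graph $G$ in $C^3=[0,1]^3$: the vertices are placed at independent uniformly distributed points of $C^3$, and each edge is realized as the straight segment between its endpoints. The mean sum of squared linking numbers of the embedded graph is $E\big[\sum \mathrm{lk}(C,C')^2\big]$, the sum taken over all unordered pairs $\{C,C'\}$ of vertex-disjoint cycles of the graph (each of length $\ge3$). For oriented segments $l,l'$, $\epsilon(l,l')$ denotes the signed crossing in orthogonal projection onto a fixed plane ($0$ if the projections do not cross, else $\pm1$ by the right-hand rule). With $A,B,C,P,Q,R$ independent uniform points in $C^3$ and $X\to Y$ the segment oriented from $X$ to $Y$: $2s=P(\epsilon(A\to B,P\to Q)\ne0)$, $u=E[\epsilon(A\to B,P\to Q)\epsilon(A\to B,Q\to R)]$, $v=E[\epsilon(A\to B,P\to Q)\epsilon(B\to C,Q\to R)]$, and $q=s+2(u+v)>0$. *)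

(* Defs.v *)
From Stdlib Require Import Reals List Arith Bool.
Import ListNotations.
Open Scope R_scope.
Open Scope bool_scope.

Definition pt : Type := (R * R * R)%type.

Definition cross2 (x1 y1 x2 y2 : R) : R := x1 * y2 - y1 * x2.

Definition rsign (x : R) : R :=
  if Rlt_dec 0 x then 1 else if Rlt_dec x 0 then -1 else 0.

Definition in01 (t : R) : bool :=
  if Rlt_dec 0 t then (if Rlt_dec t 1 then true else false) else false.

(** Signed crossing eps(A->B, P->Q) of the orthogonal projections onto the
    xy-plane (viewed from +z, larger z = over).  It is 0 if the projected
    segments do not cross (transversally, at interior points), otherwise the
    sign of the crossing by the right-hand rule: sgn of the 2D cross product
    (over-direction x under-direction). *)
Definition eps (A B P Q : pt) : R :=
  let '(ax, ay, az) := A in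
  let '(bx, by_, bz) := B in
  let '(px, py, pz) := P in
  let '(qx, qy, qz) := Q in
  let D := cross2 (bx - ax) (by_ - ay) (qx - px) (qy - py) in
  if Req_EM_T D 0 then 0 else
  let t := cross2 (px - ax) (py - ay) (qx - px) (qy - py) / D in
  let t' := cross2 (px - ax) (py - ay) (bx - ax) (by_ - ay) / D in
  if in01 t && in01 t' then
    rsign D * rsign ((az + t * (bz - az)) - (pz + t' * (qz - pz)))
  else 0.

Definition rsum {A : Type} (f : A -> R) (l : list A) : R :=
  fold_right (fun a acc => f a + acc) 0 l.

(** Cycles of the complete graph K_n on vertices 0..n-1.  A cycle is given by
    its canonical vertex list [v0; v1; ...; v_{k-1}] (k >= 3, distinct
    vertices, v0 the minimal vertex, v1 < v_{k-1}); this represents each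
    (unoriented) cycle exactly once.  Its edges are v_i -> v_{i+1 mod k}. *)
Fixpoint words (n k : nat) : list (list nat) :=
  match k with
  | O => [[]]
  | S k => flat_map (fun w => map (fun i => i :: w) (seq 0 n)) (words n k)
  end.

Fixpoint nodupb (l : list nat) : bool :=
  match l with
  | [] => true
  | a :: l => negb (existsb (Nat.eqb a) l) && nodupb l
  end.

Definition canon (c : list nat) : bool :=
  match c with
  | a :: b :: l =>
      (3 <=? length c)%nat && nodupb c
      && forallb (fun v => (a <? v)%nat) (b :: l)
      && (b <? last (b :: l) 0)%nat
  | _ => false
  end.

Definition cycles (n : nat) : list (list nat) :=
  flat_map (fun k => filter canon (words n k)) (seq 3 (n - 2)).

Definition disjointb (c c' : list nat) : bool :=
  forallb (fun v => negb (existsb (Nat.eqb v) c')) c.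

(** Unordered pairs {C, C'} of vertex-disjoint cycles, each listed once
    (ordered by their minimal vertex). *)
Definition cycle_pairs (n : nat) : list (list nat * list nat) :=
  filter (fun p => disjointb (fst p) (snd p) && (hd 0 (fst p) <? hd 0 (snd p))%nat)
    (list_prod (cycles n) (cycles n)).

Definition cyc_edges (c : list nat) : list (nat * nat) :=
  combine c (tl c ++ firstn 1 c).

Definition lk (X : nat -> pt) (c c' : list nat) : R :=
  / 2 * rsum (fun e => rsum (fun e' =>
          eps (X (fst e)) (X (snd e)) (X (fst e')) (X (snd e'))) (cyc_edges c'))
        (cyc_edges c).

Definition sum_sq_lk (n : nat) (X : nat -> pt) : R :=
  rsum (fun p => (lk X (fst p) (snd p)) ^ 2) (cycle_pairs n).

(** Expectation w.r.t. the uniform distribution on [0,1]^m, realised as the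
    limit (N -> oo) of midpoint-grid averages:  gavg N m F is the average of F
    over the grid {(2a+1)/(2N) : a < N}^m (coordinates 0..m-1). *)
Fixpoint gavg (N m : nat) (F : (nat -> R) -> R) : R :=
  match m with
  | O => F (fun _ => 0)
  | S m => / INR N * rsum (fun a =>
             gavg N m (fun g => F (fun j =>
               if Nat.eqb j m then (2 * INR a + 1) / (2 * INR N) else g j)))
           (seq 0 N)
  end.

Definition vpos (x : nat -> R) (i : nat) : pt :=
  (x (3 * i)%nat, x (3 * i + 1)%nat, x (3 * i + 2)%nat).

(** Grid average over k independent points of the cube C^3 = [0,1]^3. *)
Definition ptE (N k : nat) (G : (nat -> pt) -> R) : R :=
  gavg N (3 * k) (fun x => G (vpos x)).

Definition Expect_is (k : nat) (G : (nat -> pt) -> R) (L : R) : Prop :=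
  Un_cv (fun N => ptE (S N) k G) L.

(* Main.v *)
Require Import Defs.
From Stdlib Require Import Reals List Arith Bool Lia Lra FunctionalExtensionality.
Import ListNotations.
Open Scope R_scope.

Lemma rsum_nil {A} (f : A -> R) : rsum f [] = 0.
Proof. reflexivity. Qed.
Lemma rsum_cons {A} (f : A -> R) a l : rsum f (a :: l) = f a + rsum f l.
Proof. reflexivity. Qed.
Lemma rsum_app {A} (f : A -> R) l1 l2 : rsum f (l1 ++ l2) = rsum f l1 + rsum f l2.
Proof. induction l1; simpl; [ring| rewrite IHl1; ring]. Qed.
Lemma rsum_ext_in {A} (f g : A -> R) l : (forall x, In x l -> f x = g x) -> rsum f l = rsum g l.
Proof. induction l; intros H; simpl; [reflexivity|]. rewrite H by (left; auto). rewrite IHl; auto.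
  intros; apply H; right; auto. Qed.
Lemma rsum_ext {A} (f g : A -> R) l : (forall x, f x = g x) -> rsum f l = rsum g l.
Proof. intros; apply rsum_ext_in; auto. Qed.
Lemma rsum_plus {A} (f g : A -> R) l : rsum (fun x => f x + g x) l = rsum f l + rsum g l.
Proof. induction l; simpl; [ring| rewrite IHl; ring]. Qed.
Lemma rsum_scal {A} (c : R) (f : A -> R) l : rsum (fun x => c * f x) l = c * rsum f l.
Proof. induction l; simpl; [ring| rewrite IHl; ring]. Qed.
Lemma rsum_scal_r {A} (c : R) (f : A -> R) l : rsum (fun x => f x * c) l = rsum f l * c.
Proof. induction l; simpl; [ring| rewrite IHl; ring]. Qed.
Lemma rsum_zero {A} (l : list A) : rsum (fun _ => 0) l = 0.
Proof. induction l; simpl; [ring| rewrite IHl; ring]. Qed.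
Lemma rsum_const {A} (c : R) (l : list A) : rsum (fun _ => c) l = INR (length l) * c.
Proof. induction l; simpl length; [simpl; ring|]. rewrite rsum_cons, IHl, S_INR; ring. Qed.
Lemma rsum_map {A B} (f : B -> R) (g : A -> B) l : rsum f (map g l) = rsum (fun x => f (g x)) l.
Proof. induction l; simpl; [ring| rewrite IHl; ring]. Qed.
Lemma rsum_flat_map {A B} (f : B -> R) (g : A -> list B) l :
  rsum f (flat_map g l) = rsum (fun x => rsum f (g x)) l.
Proof. induction l; simpl; [ring| rewrite rsum_app, IHl; ring]. Qed.
Lemma rsum_exch {A B} (f : A -> B -> R) l1 l2 :
  rsum (fun x => rsum (fun y => f x y) l2) l1 = rsum (fun y => rsum (fun x => f x y) l1) l2.
Proof. induction l1; simpl. rewrite rsum_zero; reflexivity.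
  rewrite IHl1, <- rsum_plus. reflexivity. Qed.
Lemma rsum_mult {A B} (f : A -> R) (g : B -> R) l1 l2 :
  rsum f l1 * rsum g l2 = rsum (fun x => rsum (fun y => f x * g y) l2) l1.
Proof. rewrite <- rsum_scal_r. apply rsum_ext; intro; rewrite <- rsum_scal; reflexivity. Qed.
Lemma rsum_filter {A} (f : A -> R) (P : A -> bool) l :
  rsum f (filter P l) = rsum (fun x => if P x then f x else 0) l.
Proof. induction l; simpl; [ring|]. destruct (P a); simpl; rewrite IHl; ring. Qed.
Lemma rsum_prod {A B} (f : A * B -> R) l1 l2 :
  rsum f (list_prod l1 l2) = rsum (fun x => rsum (fun y => f (x, y)) l2) l1.
Proof. induction l1; simpl; [ring|]. rewrite rsum_app, rsum_map, IHl1; reflexivity. Qed.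
Lemma rsum_opp {A} (f : A -> R) l : rsum (fun x => - f x) l = - rsum f l.
Proof. induction l; simpl; [ring| rewrite IHl; ring]. Qed.
Lemma rsum_minus {A} (f g : A -> R) l : rsum (fun x => f x - g x) l = rsum f l - rsum g l.
Proof. induction l; simpl; [ring| rewrite IHl; ring]. Qed.

Lemma rsum_ind_eq (a n : nat) (c : R) : (a < n)%nat ->
  rsum (fun j => if Nat.eqb j a then c else 0) (seq 0 n) = c.
Proof.
  intros H. induction n. lia.
  rewrite seq_S, rsum_app; simpl.
  destruct (Nat.eqb_spec n a).
  - subst. rewrite (rsum_ext_in _ (fun _ => 0)). rewrite rsum_zero; ring.
    intros x Hx; apply in_seq in Hx. destruct (Nat.eqb_spec x a); [lia|reflexivity].
  - rewrite IHn by lia; ring.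
Qed.

Definition O3 : pt := (0, 0, 0).
Definition upd (X : nat -> pt) (m : nat) (p : pt) : nat -> pt :=
  fun i => if Nat.eqb i m then p else X i.
Definition avgL (L : list pt) (f : pt -> R) : R := / INR (length L) * rsum f L.
Fixpoint pavg (L : list pt) (m : nat) (G : (nat -> pt) -> R) : R :=
  match m with
  | O => G (fun _ => O3)
  | S m => avgL L (fun p => pavg L m (fun X => G (upd X m p)))
  end.

Lemma avgL_ext L f g : (forall p, f p = g p) -> avgL L f = avgL L g.
Proof. intros; unfold avgL; rewrite (rsum_ext f g); auto. Qed.
Lemma avgL_const L c : L <> [] -> avgL L (fun _ => c) = c.
Proof. intros H; unfold avgL; rewrite rsum_const. field.
  destruct L; [congruence|]. simpl length. apply not_0_INR; lia. Qed.
Lemma avgL_exch L (f : pt -> pt -> R) :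
  avgL L (fun p => avgL L (fun q => f p q)) = avgL L (fun q => avgL L (fun p => f p q)).
Proof. unfold avgL. rewrite !rsum_scal. f_equal. f_equal.
  apply rsum_exch. Qed.

Lemma pavg_ext L m : forall F G, (forall X, F X = G X) -> pavg L m F = pavg L m G.
Proof. induction m; intros F G H; simpl; auto.
  apply avgL_ext; intro p; apply IHm; auto. Qed.
Lemma pavg_scal L m : forall c F, pavg L m (fun X => c * F X) = c * pavg L m F.
Proof. induction m; intros c F; simpl; auto.
  unfold avgL. rewrite (rsum_ext _ (fun p => c * pavg L m (fun X => F (upd X m p)))).
  rewrite rsum_scal; ring. intros; apply IHm. Qed.
Lemma pavg_plus L m : forall F G, pavg L m (fun X => F X + G X) = pavg L m F + pavg L m G.
Proof. induction m; intros F G; simpl; auto.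
  unfold avgL. rewrite (rsum_ext _ (fun p => pavg L m (fun X => F (upd X m p)) + pavg L m (fun X => G (upd X m p)))).
  rewrite rsum_plus; ring. intros; apply IHm. Qed.
Lemma pavg_const L m c : L <> [] -> pavg L m (fun _ => c) = c.
Proof. intros HL; induction m; simpl; auto.
  rewrite (avgL_ext _ _ (fun _ => c)); [apply avgL_const; auto|]. intros; apply IHm. Qed.
Lemma pavg_opp L m F : pavg L m (fun X => - F X) = - pavg L m F.
Proof. rewrite (pavg_ext _ _ _ (fun X => (-1) * F X)) by (intros; ring).
  rewrite pavg_scal; ring. Qed.
Lemma pavg_rsum {A} L m (F : A -> (nat -> pt) -> R) l :
  pavg L m (fun X => rsum (fun a => F a X) l) = rsum (fun a => pavg L m (F a)) l.
Proof. induction l; simpl.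
  - rewrite (pavg_ext _ _ _ (fun X => 0 * 0)) by (intros; ring). rewrite pavg_scal; ring.
  - rewrite pavg_plus, IHl; reflexivity. Qed.
Lemma pavg_avg L m H :
  pavg L m (fun X => avgL L (fun p => H p X)) = avgL L (fun p => pavg L m (H p)).
Proof. unfold avgL. rewrite pavg_scal, pavg_rsum. reflexivity. Qed.

Lemma upd_same X m p q : upd (upd X m p) m q = upd X m q.
Proof. apply functional_extensionality; intro i; unfold upd. destruct (Nat.eqb i m); auto. Qed.
Lemma upd_comm X a b p q : a <> b -> upd (upd X a p) b q = upd (upd X b q) a p.
Proof. intros; apply functional_extensionality; intro i; unfold upd.
  destruct (Nat.eqb_spec i b), (Nat.eqb_spec i a); auto; lia. Qed.

Lemma pavg_pull L m : L <> [] -> forall j F, (j < m)%nat ->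
  pavg L m F = avgL L (fun q => pavg L m (fun X => F (upd X j q))).
Proof.
  intros HL; induction m; intros j F Hj; [lia|].
  simpl.
  destruct (Nat.eq_dec j m).
  - subst. apply avgL_ext; intro q. rewrite (avgL_ext _ _ (fun _ => pavg L m (fun X => F (upd X m q)))).
    symmetry; apply avgL_const; auto. intro p. apply pavg_ext; intro X. rewrite upd_same; auto.
  - rewrite (avgL_ext _ (fun p => pavg L m (fun X => F (upd X m p)))
      (fun p => avgL L (fun q => pavg L m (fun X => F (upd (upd X j q) m p))))).
    2:{ intro p. apply (IHm j (fun X => F (upd X m p))). lia. }
    rewrite avgL_exch. apply avgL_ext; intro q. apply avgL_ext; intro p.
    apply pavg_ext; intro X. rewrite upd_comm by lia. reflexivity.
Qed.

Definition swap (a b i : nat) : nat :=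
  if Nat.eqb i a then b else if Nat.eqb i b then a else i.

Lemma pavg_transp L m : L <> [] -> forall j G, (j < m)%nat ->
  pavg L (S m) (fun X => G (fun i => X (swap j m i))) = pavg L (S m) G.
Proof.
  intros HL j G Hj. simpl.
  rewrite (avgL_ext _ _ (fun p => pavg L m (fun X => G (upd (upd X j p) m (X j))))).
  2:{ intro p. apply pavg_ext; intro X. f_equal. apply functional_extensionality; intro i.
      unfold swap, upd. destruct (Nat.eqb_spec i j), (Nat.eqb_spec i m), (Nat.eqb_spec j m);
      subst; try lia; auto. rewrite Nat.eqb_refl; auto.
      destruct (Nat.eqb_spec j j); [|lia]; auto.
      destruct (Nat.eqb_spec i m); try lia; destruct (Nat.eqb_spec i j); try lia; auto. }
  rewrite (avgL_ext _ _ (fun p => avgL L (fun q => pavg L m (fun X => G (upd (upd X j p) m q))))).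
  2:{ intro p. rewrite (pavg_pull L m HL j) by auto. apply avgL_ext; intro q.
      apply pavg_ext; intro X. rewrite upd_same. unfold upd at 3. rewrite Nat.eqb_refl. reflexivity. }
  rewrite avgL_exch. apply avgL_ext; intro q.
  symmetry. rewrite (pavg_pull L m HL j) by auto. reflexivity.
Qed.

Definition dep_lt (m : nat) (H : (nat -> pt) -> R) : Prop :=
  forall Y Y', (forall i, (i < m)%nat -> Y i = Y' i) -> H Y = H Y'.

Ltac eqbs := repeat (match goal with |- context [Nat.eqb ?x ?y] => destruct (Nat.eqb_spec x y) end; simpl).
Lemma swap_invol a b i : swap a b (swap a b i) = i.
Proof. unfold swap. destruct (Nat.eqb_spec i a); destruct (Nat.eqb_spec i b); simpl; eqbs; lia. Qed.
Lemma swap_lt a b m i : (a < m)%nat -> (b < m)%nat -> (i < m)%nat -> (swap a b i < m)%nat.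
Proof. unfold swap; intros; destruct (Nat.eqb_spec i a), (Nat.eqb_spec i b); lia. Qed.

Lemma pavg_inj L k : L <> [] -> forall m rho H,
  (forall i, (i < m)%nat -> (rho i < k)%nat) ->
  (forall i j, (i < m)%nat -> (j < m)%nat -> rho i = rho j -> i = j) ->
  dep_lt m H ->
  pavg L k (fun X => H (fun i => X (rho i))) = pavg L m H.
Proof.
  intros HL. induction k; intros m rho H Hr Hinj Hd.
  - destruct m; [reflexivity|]. specialize (Hr 0%nat); lia.
  - destruct (existsb (fun j => Nat.eqb (rho j) k) (seq 0 m)) eqn:E.
    + apply existsb_exists in E. destruct E as [j [Hj Hjk]].
      apply in_seq in Hj. apply Nat.eqb_eq in Hjk.
      destruct m as [|m']; [lia|].
      set (rho' := fun i => rho (swap j m' i)).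
      set (H' := fun Y : nat -> pt => H (fun i => Y (swap j m' i))).
      assert (E1 : pavg L (S k) (fun X => H (fun i => X (rho i)))
                 = pavg L (S k) (fun X => H' (fun i => X (rho' i)))).
      { apply pavg_ext; intro X. unfold H', rho'. f_equal.
        apply functional_extensionality; intro i. rewrite swap_invol; auto. }
      assert (E2 : pavg L (S m') H' = pavg L (S m') H).
      { destruct (Nat.eq_dec j m').
        - subst. apply pavg_ext; intro X. unfold H'. f_equal.
          apply functional_extensionality; intro i. unfold swap.
          destruct (Nat.eqb_spec i m'); subst; auto.
        - apply pavg_transp; auto; lia. }
      rewrite E1, <- E2. clear E1 E2.
      assert (Hr' : forall i, (i < S m')%nat -> (rho' i < S k)%nat).
      { intros; unfold rho'; apply Hr, swap_lt; lia. }
      assert (Hinj' : forall i j0, (i < S m')%nat -> (j0 < S m')%nat -> rho' i = rho' j0 -> i = j0).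
      { intros i j0 Hi Hj0 Heq. unfold rho' in Heq. apply Hinj in Heq; try (apply swap_lt; lia).
        rewrite <- (swap_invol j m' i), <- (swap_invol j m' j0), Heq; auto. }
      assert (Hm' : rho' m' = k).
      { unfold rho', swap. rewrite Nat.eqb_refl. destruct (Nat.eqb_spec m' j); subst; auto. }
      assert (Hd' : dep_lt (S m') H').
      { intros Y Y' HY. unfold H'. apply Hd. intros i Hi. apply HY, swap_lt; lia. }
      clearbody rho' H'. clear Hd Hr Hinj H rho Hjk.
      simpl. apply avgL_ext; intro p.
      rewrite (pavg_ext _ _ _ (fun X => (fun Y => H' (upd Y m' p)) (fun i => X (rho' i)))).
      * apply (IHk m' rho' (fun Y => H' (upd Y m' p))).
        -- intros i Hi. assert (rho' i <> k). { intro C. rewrite <- Hm' in C. apply Hinj' in C; lia. }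
           specialize (Hr' i). lia.
        -- intros; apply Hinj'; lia.
        -- intros Y Y' HY. apply Hd'. intros i Hi. unfold upd. destruct (Nat.eqb_spec i m'); auto.
           apply HY; lia.
      * intro X. apply Hd'. intros i Hi. unfold upd.
        destruct (Nat.eqb_spec i m'), (Nat.eqb_spec (rho' i) k); auto.
        -- exfalso. apply n. rewrite e; auto.
        -- exfalso. rewrite <- Hm' in e. apply Hinj' in e; lia.
    + simpl. rewrite (avgL_ext _ _ (fun _ => pavg L k (fun X => H (fun i => X (rho i))))).
      * rewrite avgL_const by auto. apply IHk; auto.
        intros i Hi. assert (rho i <> k).
        { intro C. assert (existsb (fun j => Nat.eqb (rho j) k) (seq 0 m) = true).
          apply existsb_exists. exists i; split. apply in_seq; lia. apply Nat.eqb_eq; auto.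
          congruence. }
        specialize (Hr i Hi); lia.
      * intro p. apply pavg_ext; intro X. apply Hd. intros i Hi. unfold upd.
        destruct (Nat.eqb_spec (rho i) k); auto. exfalso.
        assert (existsb (fun j => Nat.eqb (rho j) k) (seq 0 m) = true).
        apply existsb_exists. exists i; split. apply in_seq; lia. apply Nat.eqb_eq; auto.
        congruence.
Qed.

Lemma pavg_list L n vs H : L <> [] -> NoDup vs -> (forall v, In v vs -> (v < n)%nat) ->
  dep_lt (length vs) H ->
  pavg L n (fun X => H (fun i => X (nth i vs 0%nat))) = pavg L (length vs) H.
Proof.
  intros HL Hnd Hv Hd. apply pavg_inj; auto.
  - intros i Hi. apply Hv, nth_In; auto.
  - intros i j Hi Hj. apply NoDup_nth; auto.
Qed.

Lemma pavg_antisym L n a b F : L <> [] -> (a < n)%nat -> (b < n)%nat -> dep_lt n F ->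
  (forall X, F (fun i => X (swap a b i)) = - F X) -> pavg L n F = 0.
Proof.
  intros HL Ha Hb Hd HF.
  assert (pavg L n (fun X => F (fun i => X (swap a b i))) = pavg L n F).
  { apply pavg_inj; auto. intros; apply swap_lt; auto.
    intros i j _ _ E. rewrite <- (swap_invol a b i), <- (swap_invol a b j), E; auto. }
  rewrite (pavg_ext _ _ _ (fun X => - F X)) in H by auto.
  rewrite pavg_opp in H. lra.
Qed.

Definition epsf (D t t' z : R) : R :=
  if Req_EM_T D 0 then 0 else
  if in01 t && in01 t' then rsign D * rsign z else 0.

Lemma eps_as (ax ay az bx by_ bz px py pz qx qy qz : R) :
  eps (ax,ay,az) (bx,by_,bz) (px,py,pz) (qx,qy,qz) =
  let D := cross2 (bx - ax) (by_ - ay) (qx - px) (qy - py) in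
  let t := cross2 (px - ax) (py - ay) (qx - px) (qy - py) / D in
  let t' := cross2 (px - ax) (py - ay) (bx - ax) (by_ - ay) / D in
  epsf D t t' ((az + t * (bz - az)) - (pz + t' * (qz - pz))).
Proof. reflexivity. Qed.

Lemma rsign_opp x : rsign (- x) = - rsign x.
Proof. unfold rsign. destruct (Rlt_dec 0 x), (Rlt_dec 0 (-x)), (Rlt_dec x 0), (Rlt_dec (-x) 0); lra. Qed.
Lemma in01_1m t : in01 (1 - t) = in01 t.
Proof. unfold in01. destruct (Rlt_dec 0 t), (Rlt_dec t 1), (Rlt_dec 0 (1-t)), (Rlt_dec (1-t) 1); lra || reflexivity. Qed.

Lemma eps_antisym2 A B P Q : eps A B Q P = - eps A B P Q.
Proof.
  destruct A as [[ax ay] az], B as [[bx by_] bz], P as [[px py] pz], Q as [[qx qy] qz].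
  rewrite !eps_as. cbv zeta. unfold epsf, cross2.
  destruct (Req_EM_T ((bx - ax) * (qy - py) - (by_ - ay) * (qx - px)) 0) as [e|e];
  destruct (Req_EM_T ((bx - ax) * (py - qy) - (by_ - ay) * (px - qx)) 0) as [e'|e']; try lra.
  set (D := (bx - ax) * (qy - py) - (by_ - ay) * (qx - px)) in *.
  assert (ED : (bx - ax) * (py - qy) - (by_ - ay) * (px - qx) = - D) by (unfold D; ring).
  rewrite ED in *.
  set (t := ((px - ax) * (qy - py) - (py - ay) * (qx - px)) / D).
  set (t' := ((px - ax) * (by_ - ay) - (py - ay) * (bx - ax)) / D).
  assert (E1 : ((qx - ax) * (py - qy) - (qy - ay) * (px - qx)) / - D = t) by (unfold t; field; auto).
  assert (E2 : ((qx - ax) * (by_ - ay) - (qy - ay) * (bx - ax)) / - D = 1 - t') by (unfold t', D; field; auto).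
  rewrite E1, E2, in01_1m.
  destruct (in01 t && in01 t'); [|ring].
  rewrite rsign_opp.
  replace (az + t * (bz - az) - (qz + (1 - t') * (pz - qz))) with (az + t * (bz - az) - (pz + t' * (qz - pz))) by ring.
  ring.
Qed.

Lemma eps_sym A B P Q : eps P Q A B = eps A B P Q.
Proof.
  destruct A as [[ax ay] az], B as [[bx by_] bz], P as [[px py] pz], Q as [[qx qy] qz].
  rewrite !eps_as. cbv zeta. unfold epsf, cross2.
  destruct (Req_EM_T ((bx - ax) * (qy - py) - (by_ - ay) * (qx - px)) 0) as [e|e];
  destruct (Req_EM_T ((qx - px) * (by_ - ay) - (qy - py) * (bx - ax)) 0) as [e'|e']; try lra.
  set (D := (bx - ax) * (qy - py) - (by_ - ay) * (qx - px)) in *.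
  assert (ED : (qx - px) * (by_ - ay) - (qy - py) * (bx - ax) = - D) by (unfold D; ring).
  rewrite ED in *.
  set (t := ((px - ax) * (qy - py) - (py - ay) * (qx - px)) / D).
  set (t' := ((px - ax) * (by_ - ay) - (py - ay) * (bx - ax)) / D).
  assert (E1 : ((ax - px) * (by_ - ay) - (ay - py) * (bx - ax)) / - D = t') by (unfold t'; field; auto).
  assert (E2 : ((ax - px) * (qy - py) - (ay - py) * (qx - px)) / - D = t) by (unfold t; field; auto).
  rewrite E1, E2, andb_comm.
  destruct (in01 t && in01 t'); [|ring].
  rewrite rsign_opp.
  replace (pz + t' * (qz - pz) - (az + t * (bz - az))) with (- (az + t * (bz - az) - (pz + t' * (qz - pz)))) by ring.
  rewrite rsign_opp. ring.
Qed.

Lemma eps_antisym1 A B P Q : eps B A P Q = - eps A B P Q.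
Proof. rewrite <- (eps_sym A B), <- (eps_sym B A), eps_antisym2; reflexivity. Qed.

Lemma rsign_vals x : rsign x = 0 \/ rsign x = 1 \/ rsign x = -1.
Proof. unfold rsign; destruct (Rlt_dec 0 x), (Rlt_dec x 0); auto. Qed.

Lemma eps_sq A B P Q : eps A B P Q * eps A B P Q =
  if Req_EM_T (eps A B P Q) 0 then 0 else 1.
Proof.
  assert (H : eps A B P Q = 0 \/ eps A B P Q = 1 \/ eps A B P Q = -1).
  { destruct A as [[ax ay] az], B as [[bx by_] bz], P as [[px py] pz], Q as [[qx qy] qz].
    rewrite eps_as; cbv zeta; unfold epsf.
    destruct (Req_EM_T _ 0); auto. destruct (_ && _); auto.
    destruct (rsign_vals ((bx - ax) * (qy - py) - (by_ - ay) * (qx - px))) as [h|[h|h]];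
    unfold cross2; rewrite h;
    match goal with |- context [rsign ?z] => destruct (rsign_vals z) as [h'|[h'|h']]; rewrite h' end;
    lra. }
  destruct (Req_EM_T (eps A B P Q) 0); destruct H as [h|[h|h]]; rewrite h in *; lra.
Qed.

Definition gval (N a : nat) : R := (2 * INR a + 1) / (2 * INR N).
Definition grid (N : nat) : list pt :=
  flat_map (fun a => flat_map (fun b => map (fun c => (gval N c, gval N b, gval N a)) (seq 0 N)) (seq 0 N)) (seq 0 N).

Lemma grid_nonempty N : (0 < N)%nat -> grid N <> [].
Proof. intros H. destruct N; [lia|]. simpl. discriminate. Qed.

Lemma avg_grid N f : (0 < N)%nat -> avgL (grid N) f =
  / INR N * rsum (fun a => / INR N * rsum (fun b => / INR N * rsum (fun c =>
      f (gval N c, gval N b, gval N a)) (seq 0 N)) (seq 0 N)) (seq 0 N).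
Proof.
  intros HN. unfold avgL.
  assert (Hl : INR (length (grid N)) = INR N * INR N * INR N).
  { rewrite <- (Rmult_1_r (INR (length _))), <- rsum_const.
    unfold grid. rewrite rsum_flat_map.
    rewrite (rsum_ext _ (fun _ => INR N * INR N)).
    rewrite rsum_const, length_seq; ring.
    intros a. rewrite rsum_flat_map.
    rewrite (rsum_ext _ (fun _ => INR N)). rewrite rsum_const, length_seq; ring.
    intros b. rewrite rsum_map, rsum_const, length_seq; ring. }
  rewrite Hl. unfold grid. rewrite rsum_flat_map.
  rewrite (rsum_ext (fun x => rsum f _) (fun a => rsum (fun b => rsum (fun c => f (gval N c, gval N b, gval N a)) (seq 0 N)) (seq 0 N))).
  2:{ intro a. rewrite rsum_flat_map. apply rsum_ext; intro b. rewrite rsum_map. reflexivity. }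
  assert (INR N <> 0) by (apply not_0_INR; lia).
  rewrite (rsum_ext (fun a => / INR N * _) (fun a => / INR N * / INR N * rsum (fun b => rsum (fun c => f (gval N c, gval N b, gval N a)) (seq 0 N)) (seq 0 N))).
  2:{ intro a. rewrite rsum_scal. ring. }
  rewrite rsum_scal. rewrite !Rinv_mult. ring.
Qed.

Lemma gavg_ext N m : forall F G, (forall x, F x = G x) -> gavg N m F = gavg N m G.
Proof. induction m; intros F G H; simpl; auto. f_equal. apply rsum_ext; intro a. apply IHm; auto. Qed.

Lemma ptE_pavg N k G : (0 < N)%nat -> ptE N k G = pavg (grid N) k G.
Proof.
  intros HN. unfold ptE. revert G. induction k; intro G; [reflexivity|].
  replace (3 * S k)%nat with (S (S (S (3 * k)))) by lia.
  cbn [pavg]. rewrite avg_grid by auto. cbn [gavg].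
  f_equal. apply rsum_ext; intro a. f_equal. apply rsum_ext; intro b. f_equal. apply rsum_ext; intro c.
  rewrite <- IHk. apply gavg_ext; intro x. f_equal.
  apply functional_extensionality; intro i. unfold vpos, upd.
  destruct (Nat.eqb_spec i k).
  - subst. repeat (match goal with |- context [Nat.eqb ?x ?y] => destruct (Nat.eqb_spec x y) end; simpl); try lia; reflexivity.
  - repeat (match goal with |- context [Nat.eqb ?x ?y] => destruct (Nat.eqb_spec x y) end; simpl); try lia; reflexivity.
Qed.

Definition ind (b : bool) : R := if b then 1 else 0.
Definition cnt (n : nat) (q : nat -> bool) : R := rsum (fun i => ind (q i)) (seq 0 n).
Fixpoint ffR (x : R) (k : nat) : R :=
  match k with O => 1 | S k => x * ffR (x - 1) k end.

Lemma ind_and a b : ind (a && b) = ind a * ind b.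
Proof. destruct a, b; unfold ind; simpl; ring. Qed.

Lemma words_in n k w : In w (words n k) -> length w = k /\ (forall x, In x w -> (x < n)%nat).
Proof.
  revert w; induction k; intros w H; simpl in H.
  - destruct H as [H|[]]; subst; simpl; split; auto; intros _ [].
  - apply in_flat_map in H. destruct H as [w' [Hw' H]]. apply in_map_iff in H.
    destruct H as [i [E Hi]]. subst. apply IHk in Hw'. destruct Hw' as [Hl Hx].
    apply in_seq in Hi. simpl; split; [lia|]. intros x [E|E]; [lia|auto].
Qed.

Lemma rsum_words_cons n k f : rsum f (words n (S k)) =
  rsum (fun i => rsum (fun w => f (i :: w)) (words n k)) (seq 0 n).
Proof. simpl. rewrite rsum_flat_map. rewrite <- rsum_exch. apply rsum_ext; intro w.
  rewrite rsum_map. reflexivity. Qed.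

Lemma rsum_words_snoc n k : forall f, rsum f (words n (S k)) =
  rsum (fun i => rsum (fun w => f (w ++ [i])) (words n k)) (seq 0 n).
Proof.
  induction k; intro f.
  - rewrite rsum_words_cons. apply rsum_ext; intro i. simpl. reflexivity.
  - rewrite rsum_words_cons.
    rewrite (rsum_ext _ (fun i => rsum (fun j => rsum (fun w => f (i :: w ++ [j])) (words n k)) (seq 0 n))).
    2:{ intro i. apply (IHk (fun w => f (i :: w))). }
    rewrite rsum_exch. apply rsum_ext; intro j.
    rewrite (rsum_words_cons n k (fun w => f (w ++ [j]))). reflexivity.
Qed.

Lemma rsum_words_rev n k : forall f, rsum f (words n k) = rsum (fun w => f (rev w)) (words n k).
Proof.
  induction k; intro f; [reflexivity|].
  rewrite rsum_words_snoc, rsum_words_cons.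
  apply rsum_ext; intro i. rewrite (IHk (fun w => f (w ++ [i]))).
  apply rsum_ext; intro w. simpl. reflexivity.
Qed.

Lemma nodupb_iff l : nodupb l = true <-> NoDup l.
Proof.
  induction l; simpl; split; intro H.
  - constructor.
  - reflexivity.
  - apply andb_true_iff in H as [H1 H2]. constructor; [|apply IHl; auto].
    intro Hin. apply negb_true_iff in H1. assert (existsb (Nat.eqb a) l = true).
    apply existsb_exists. exists a; split; auto. apply Nat.eqb_refl. congruence.
  - inversion H; subst. apply andb_true_iff; split; [|apply IHl; auto].
    apply negb_true_iff. destruct (existsb (Nat.eqb a) l) eqn:E; auto.
    apply existsb_exists in E. destruct E as [x [Hx E]]. apply Nat.eqb_eq in E; subst. contradiction.
Qed.

Lemma notin_iff v l : negb (existsb (Nat.eqb v) l) = true <-> ~ In v l.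
Proof.
  rewrite negb_true_iff. split; intro H.
  - intro Hin. assert (existsb (Nat.eqb v) l = true). apply existsb_exists. exists v; split; auto.
    apply Nat.eqb_refl. congruence.
  - destruct (existsb (Nat.eqb v) l) eqn:E; auto. apply existsb_exists in E.
    destruct E as [x [Hx E]]. apply Nat.eqb_eq in E; subst. contradiction.
Qed.

Lemma forallb_andb {A} (f g : A -> bool) l : forallb (fun x => f x && g x) l = forallb f l && forallb g l.
Proof. induction l; simpl; auto. rewrite IHl. destruct (f a), (g a), (forallb f l), (forallb g l); reflexivity. Qed.

Lemma forallb_notin i q w : forallb (fun v => q v && negb (Nat.eqb i v)) w = forallb q w && negb (existsb (Nat.eqb i) w).
Proof. induction w; simpl; auto. rewrite IHw.
  destruct (q a), (Nat.eqb i a), (forallb q w), (existsb (Nat.eqb i) w); reflexivity. Qed.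

Lemma cnt_minus n q i : (i < n)%nat ->
  cnt n (fun v => q v && negb (Nat.eqb i v)) = cnt n q - ind (q i).
Proof.
  intros Hi. unfold cnt.
  rewrite (rsum_ext _ (fun v => ind (q v) - (if Nat.eqb v i then ind (q i) else 0))).
  rewrite rsum_minus, rsum_ind_eq; auto.
  intro v. rewrite (Nat.eqb_sym i v). destruct (Nat.eqb_spec v i); subst; simpl.
  - destruct (q i); unfold ind; simpl; ring.
  - destruct (q v); unfold ind; simpl; ring.
Qed.

Lemma inj_count n k : forall q,
  rsum (fun w => ind (nodupb w && forallb q w)) (words n k) = ffR (cnt n q) k.
Proof.
  induction k; intro q.
  - simpl. unfold ind; simpl; ring.
  - rewrite rsum_words_cons.
    rewrite (rsum_ext_in _ (fun i => ind (q i) * ffR (cnt n q - 1) k)).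
    + rewrite rsum_scal_r. simpl. reflexivity.
    + intros i Hi. apply in_seq in Hi.
      rewrite (rsum_ext _ (fun w => ind (q i) * ind (nodupb w && forallb (fun v => q v && negb (Nat.eqb i v)) w))).
      * rewrite rsum_scal, IHk, cnt_minus by lia. destruct (q i); unfold ind; simpl; ring.
      * intro w. rewrite <- ind_and. f_equal. simpl. rewrite forallb_notin.
        destruct (q i), (existsb (Nat.eqb i) w), (nodupb w), (forallb q w); reflexivity.
Qed.

Lemma last_nth (l : list nat) d : last l d = nth (length l - 1) l d.
Proof. induction l as [|a l IH]; [reflexivity|].
  destruct l as [|b l]; [reflexivity|]. change (last (a :: b :: l) d) with (last (b :: l) d).
  rewrite IH. simpl length. replace (S (S (length l)) - 1)%nat with (S (S (length l) - 1)) by lia.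
  reflexivity. Qed.

Lemma hd_rev w : w <> [] -> hd 0%nat (rev w) = last w 0%nat.
Proof.
  intros H. rewrite last_nth. destruct w as [|a w]; [congruence|].
  assert (Hh : forall l : list nat, hd 0%nat l = nth 0 l 0%nat) by (intros [|]; reflexivity).
  rewrite Hh.
  rewrite rev_nth by (simpl; lia). f_equal.
Qed.

Lemma last_rev w : w <> [] -> last (rev w) 0%nat = hd 0%nat w.
Proof. intros H. rewrite <- (rev_involutive w) at 2. rewrite hd_rev; auto.
  intro C; apply (f_equal (@length nat)) in C; rewrite length_rev in C.
  destruct w; [congruence|discriminate]. Qed.

Lemma forallb_rev {A} (f : A -> bool) l : forallb f (rev l) = forallb f l.
Proof. induction l; simpl; auto. rewrite forallb_app, IHl. simpl. destruct (f a), (forallb f l); reflexivity. Qed.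

Lemma nodupb_rev l : nodupb (rev l) = nodupb l.
Proof. destruct (nodupb l) eqn:E.
  - apply nodupb_iff. apply NoDup_rev. apply nodupb_iff; auto.
  - destruct (nodupb (rev l)) eqn:E'; auto. apply nodupb_iff in E'. apply NoDup_rev in E'.
    rewrite rev_involutive in E'. apply nodupb_iff in E'. congruence.
Qed.

Lemma hd_last_neq w : nodupb w = true -> (2 <= length w)%nat -> hd 0%nat w <> last w 0%nat.
Proof.
  intros H Hl. destruct w as [|a w]; simpl in Hl; [lia|].
  destruct w as [|b w]; simpl in Hl; [lia|].
  apply nodupb_iff in H. inversion H; subst. simpl hd. intro E. apply H2.
  rewrite E. simpl. clear. revert b; induction w; intros b; [left; auto|].
  right. apply IHw.
Qed.

Lemma half_count n k q : (2 <= k)%nat ->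
  rsum (fun w => ind (nodupb w && forallb q w && Nat.ltb (hd 0%nat w) (last w 0%nat))) (words n k)
  = ffR (cnt n q) k / 2.
Proof.
  intros Hk.
  set (A := rsum _ _).
  set (B := rsum (fun w => ind (nodupb w && forallb q w && Nat.ltb (last w 0%nat) (hd 0%nat w))) (words n k)).
  assert (EAB : A = B).
  { unfold A. rewrite rsum_words_rev. unfold B. apply rsum_ext_in; intros w Hw.
    apply words_in in Hw as [Hl _].
    assert (w <> []) by (intro E; rewrite E in Hl; simpl in Hl; lia).
    rewrite nodupb_rev, forallb_rev, hd_rev, last_rev by auto. reflexivity. }
  assert (ES : A + B = ffR (cnt n q) k).
  { rewrite <- inj_count. unfold A, B. rewrite <- rsum_plus. apply rsum_ext_in; intros w Hw.
    apply words_in in Hw as [Hl _].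
    destruct (nodupb w) eqn:En; [|unfold ind; simpl; ring].
    pose proof (hd_last_neq w En ltac:(lia)).
    destruct (forallb q w); [|unfold ind; simpl; ring]. simpl.
    destruct (Nat.ltb_spec (hd 0%nat w) (last w 0%nat)), (Nat.ltb_spec (last w 0%nat) (hd 0%nat w));
    unfold ind; try lia; ring. }
  lra.
Qed.

Definition qgt (q : nat -> bool) (v0 : nat) : nat -> bool := fun v => q v && Nat.ltb v0 v.

Lemma ffR_S_r x m : ffR x (S m) = ffR x m * (x - INR m).
Proof. revert x; induction m; intro x; [simpl; ring|].
  change (ffR x (S (S m))) with (x * ffR (x - 1) (S m)). rewrite IHm.
  change (ffR x (S m)) with (x * ffR (x - 1) m). rewrite S_INR. ring. Qed.

Lemma cnt_S n q : cnt (S n) q = ind (q 0%nat) + cnt n (fun i => q (S i)).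
Proof. unfold cnt. rewrite <- cons_seq, rsum_cons, <- seq_shift, rsum_map. reflexivity. Qed.

Lemma hockey n : forall q m,
  rsum (fun v0 => ind (q v0) * ffR (cnt n (qgt q v0)) m) (seq 0 n) = ffR (cnt n q) (S m) / INR (S m).
Proof.
  induction n; intros q m.
  - assert (INR (S m) <> 0) by (apply not_0_INR; lia).
    unfold cnt. simpl rsum. simpl seq. change (ffR 0 (S m)) with (0 * ffR (0 - 1) m).
    field; auto.
  - rewrite <- cons_seq, rsum_cons, <- seq_shift, rsum_map.
    rewrite (rsum_ext _ (fun v => ind ((fun i => q (S i)) v) * ffR (cnt n (qgt (fun i => q (S i)) v)) m)).
    2:{ intro v. f_equal. f_equal. rewrite cnt_S. unfold qgt. simpl.
        rewrite andb_false_r. unfold ind at 1. rewrite Rplus_0_l. reflexivity. }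
    rewrite IHn.
    replace (cnt (S n) (qgt q 0)) with (cnt n (fun i => q (S i))).
    2:{ rewrite cnt_S. unfold qgt. simpl. rewrite andb_false_r. unfold ind at 1.
        rewrite Rplus_0_l. unfold cnt. apply rsum_ext; intro i. rewrite andb_true_r. reflexivity. }
    rewrite (cnt_S n q).
    set (C := cnt n (fun i => q (S i))).
    assert (INR (S m) <> 0) by (apply not_0_INR; lia).
    destruct (q 0%nat); unfold ind.
    + change (ffR (1 + C) (S m)) with ((1 + C) * ffR (1 + C - 1) m).
      replace (1 + C - 1) with C by ring. rewrite ffR_S_r. rewrite S_INR in *. field; auto.
    + replace (0 + C) with C by ring. ring.
Qed.

Lemma canon_eq v0 w q : (2 <= length w)%nat ->
  canon (v0 :: w) && forallb q (v0 :: w) =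
  q v0 && (nodupb w && forallb (qgt q v0) w && Nat.ltb (hd 0%nat w) (last w 0%nat)).
Proof.
  intros Hl. destruct w as [|b w']; [simpl in Hl; lia|].
  unfold canon. 
  assert (E3 : Nat.leb 3 (length (v0 :: b :: w')) = true) by (apply Nat.leb_le; simpl in *; lia).
  rewrite E3. change (nodupb (v0 :: b :: w')) with (negb (existsb (Nat.eqb v0) (b :: w')) && nodupb (b :: w')).
  change (forallb q (v0 :: b :: w')) with (q v0 && forallb q (b :: w')).
  unfold qgt. rewrite forallb_andb. change (hd 0%nat (b :: w')) with b.
  destruct (forallb (fun v => Nat.ltb v0 v) (b :: w')) eqn:E.
  - assert (existsb (Nat.eqb v0) (b :: w') = false).
    { apply negb_true_iff, notin_iff. intro Hin. rewrite forallb_forall in E.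
      apply E in Hin. apply Nat.ltb_lt in Hin. lia. }
    rewrite H. simpl negb.
    destruct (q v0), (nodupb (b :: w')), (forallb q (b :: w')), (Nat.ltb b (last (b :: w') 0%nat)); reflexivity.
  - destruct (q v0), (existsb (Nat.eqb v0) (b :: w')), (nodupb (b :: w')), (forallb q (b :: w')), (Nat.ltb b (last (b :: w') 0%nat)); reflexivity.
Qed.

Lemma canon_count n l q : (3 <= l)%nat ->
  rsum (fun w => ind (canon w && forallb q w)) (words n l) = ffR (cnt n q) l / (2 * INR l).
Proof.
  intros Hl. destruct l as [|m]; [lia|].
  rewrite rsum_words_cons.
  rewrite (rsum_ext _ (fun v0 => ind (q v0) * ffR (cnt n (qgt q v0)) m * / 2)).
  - rewrite rsum_scal_r, hockey. field. apply not_0_INR; lia.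
  - intro v0. rewrite Rmult_assoc. change (ffR (cnt n (qgt q v0)) m * / 2) with (ffR (cnt n (qgt q v0)) m / 2).
    rewrite <- half_count by lia. rewrite <- rsum_scal.
    apply rsum_ext_in; intros w Hw. apply words_in in Hw as [Hw _].
    rewrite canon_eq by lia. rewrite ind_and. reflexivity.
Qed.

Lemma canon_props c : canon c = true -> nodupb c = true /\ (3 <= length c)%nat.
Proof.
  destruct c as [|a [|b l]]; try discriminate. unfold canon. intro H.
  apply andb_true_iff in H as [H _]. apply andb_true_iff in H as [H _].
  apply andb_true_iff in H as [H1 H2]. apply Nat.leb_le in H1. auto.
Qed.

Lemma cycles_in n c : In c (cycles n) ->
  canon c = true /\ (forall x, In x c -> (x < n)%nat) /\ In (length c) (seq 3 (n - 2)).
Proof.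
  unfold cycles. intro H. apply in_flat_map in H as [k [Hk H]].
  apply filter_In in H as [H Hc]. apply words_in in H as [Hl Hx]. subst. auto.
Qed.

Lemma rsum_cycles n f : rsum f (cycles n) =
  rsum (fun k => rsum (fun w => ind (canon w) * f w) (words n k)) (seq 3 (n - 2)).
Proof. unfold cycles. rewrite rsum_flat_map. apply rsum_ext; intro k.
  rewrite rsum_filter. apply rsum_ext; intro w. destruct (canon w); unfold ind; ring. Qed.

Lemma disj_iff c w : disjointb c w = true <-> (forall v, In v c -> ~ In v w).
Proof. unfold disjointb. rewrite forallb_forall. split; intros H v Hv; apply notin_iff; auto. Qed.

Lemma disj_sym c w : disjointb c w = disjointb w c.
Proof.
  apply eq_true_iff_eq. rewrite !disj_iff. split; intros H v Hv Hv'; eapply H; eauto.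
Qed.

Lemma disj_forallb c w : disjointb c w = forallb (fun v => negb (existsb (Nat.eqb v) c)) w.
Proof. rewrite disj_sym. reflexivity. Qed.

Lemma cnt_in n c : nodupb c = true -> (forall x, In x c -> (x < n)%nat) ->
  cnt n (fun v => existsb (Nat.eqb v) c) = INR (length c).
Proof.
  induction c as [|a c IH]; intros Hnd Hx.
  - unfold cnt; simpl existsb; unfold ind; simpl length; rewrite rsum_zero; reflexivity.
  - simpl in Hnd. apply andb_true_iff in Hnd as [Ha Hnd].
    unfold cnt in *. rewrite (rsum_ext _ (fun v => (if Nat.eqb v a then 1 else 0) + ind (existsb (Nat.eqb v) c))).
    + rewrite rsum_plus, rsum_ind_eq, IH; auto. simpl length. rewrite S_INR; ring.
      intros; apply Hx; right; auto. apply Hx; left; auto.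
    + intro v. simpl existsb. destruct (Nat.eqb_spec v a).
      * subst v. simpl. apply negb_true_iff in Ha. rewrite Ha. unfold ind; simpl; ring.
      * simpl. ring.
Qed.

Lemma cnt_notin n c : nodupb c = true -> (forall x, In x c -> (x < n)%nat) ->
  cnt n (fun v => negb (existsb (Nat.eqb v) c)) = INR n - INR (length c).
Proof.
  intros H1 H2. rewrite <- (cnt_in n c) by auto. unfold cnt.
  rewrite (rsum_ext _ (fun v => 1 - ind (existsb (Nat.eqb v) c))).
  rewrite rsum_minus, rsum_const, length_seq; ring.
  intro v; destruct (existsb (Nat.eqb v) c); unfold ind; simpl; ring.
Qed.

Lemma inner_sum n c : nodupb c = true -> (forall x, In x c -> (x < n)%nat) ->
  rsum (fun c' => ind (disjointb c c') * INR (length c')) (cycles n) =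
  rsum (fun l => ffR (INR n - INR (length c)) l / 2) (seq 3 (n - 2)).
Proof.
  intros H1 H2. rewrite rsum_cycles. apply rsum_ext_in; intros l Hl. apply in_seq in Hl.
  rewrite (rsum_ext_in _ (fun w => INR l * ind (canon w && forallb (fun v => negb (existsb (Nat.eqb v) c)) w))).
  - rewrite rsum_scal, canon_count by lia. rewrite cnt_notin by auto. field. apply not_0_INR; lia.
  - intros w Hw. apply words_in in Hw as [Hw _]. rewrite Hw, disj_forallb, ind_and. ring.
Qed.

Lemma Q_formula n :
  rsum (fun c => rsum (fun c' => ind (disjointb c c') * (INR (length c) * INR (length c'))) (cycles n)) (cycles n) =
  rsum (fun k => rsum (fun l => ffR (INR n) k * ffR (INR n - INR k) l / 4) (seq 3 (n - 2))) (seq 3 (n - 2)).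
Proof.
  rewrite rsum_cycles. apply rsum_ext_in; intros k Hk. apply in_seq in Hk.
  rewrite (rsum_ext_in _ (fun w => INR k * rsum (fun l => ffR (INR n - INR k) l / 2) (seq 3 (n - 2)) * ind (canon w))).
  - rewrite rsum_scal. rewrite (rsum_ext (fun w => ind (canon w)) (fun w => ind (canon w && forallb (fun _ => true) w))).
    + rewrite canon_count by lia. simpl cnt.
      assert (cnt n (fun _ => true) = INR n).
      { unfold cnt, ind. rewrite rsum_const, length_seq; ring. }
      rewrite H. rewrite Rmult_comm, <- Rmult_assoc, <- rsum_scal.
      apply rsum_ext; intro l. field. apply not_0_INR; lia.
    + intro w. replace (forallb (fun _ => true) w) with true. rewrite andb_true_r. reflexivity.
      induction w; simpl; auto.
  - intros w Hw. apply words_in in Hw as [Hl Hx].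
    destruct (canon w) eqn:Ec; [|unfold ind; ring].
    apply canon_props in Ec as [Hnd _].
    rewrite (rsum_ext _ (fun c' => INR (length w) * (ind (disjointb w c') * INR (length c')))) by (intros; ring).
    rewrite rsum_scal, inner_sum by auto. rewrite Hl. unfold ind; ring.
Qed.

Lemma hd_neq c c' : disjointb c c' = true -> c <> [] -> c' <> [] -> hd 0%nat c <> hd 0%nat c'.
Proof.
  intros H Hc Hc' E. rewrite disj_iff in H. destruct c as [|a c]; [congruence|].
  destruct c' as [|b c']; [congruence|]. simpl in E. subst. apply (H b); left; auto.
Qed.

Lemma P_formula n :
  rsum (fun p => INR (length (fst p)) * INR (length (snd p))) (cycle_pairs n) =
  / 2 * rsum (fun c => rsum (fun c' => ind (disjointb c c') * (INR (length c) * INR (length c'))) (cycles n)) (cycles n).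
Proof.
  unfold cycle_pairs. rewrite rsum_filter, rsum_prod. simpl fst; simpl snd.
  set (P := rsum (fun x => rsum (fun y => if disjointb x y && Nat.ltb (hd 0%nat x) (hd 0%nat y)
              then INR (length x) * INR (length y) else 0) (cycles n)) (cycles n)).
  set (P' := rsum (fun x => rsum (fun y => if disjointb x y && Nat.ltb (hd 0%nat y) (hd 0%nat x)
              then INR (length x) * INR (length y) else 0) (cycles n)) (cycles n)).
  assert (E1 : P = P').
  { unfold P, P'. rewrite rsum_exch. apply rsum_ext; intro x. apply rsum_ext; intro y.
    rewrite disj_sym. destruct (_ && _); ring. }
  assert (E2 : P + P' = rsum (fun c => rsum (fun c' => ind (disjointb c c') * (INR (length c) * INR (length c'))) (cycles n)) (cycles n)).
  { unfold P, P'. rewrite <- rsum_plus. apply rsum_ext_in; intros x Hx. rewrite <- rsum_plus.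
    apply rsum_ext_in; intros y Hy.
    apply cycles_in in Hx as [Hx _]. apply canon_props in Hx as [_ Hx].
    apply cycles_in in Hy as [Hy _]. apply canon_props in Hy as [_ Hy].
    destruct (disjointb x y) eqn:Ed; [|simpl; unfold ind; ring].
    assert (hd 0%nat x <> hd 0%nat y).
    { apply hd_neq; auto; intro E; subst; simpl in *; lia. }
    simpl. unfold ind.
    destruct (Nat.ltb_spec (hd 0%nat x) (hd 0%nat y)), (Nat.ltb_spec (hd 0%nat y) (hd 0%nat x)); try lia; ring. }
  lra.
Qed.

Lemma ffR_add x k : forall l, ffR x (k + l) = ffR x k * ffR (x - INR k) l.
Proof.
  revert x; induction k; intros x l.
  - simpl. replace (x - 0) with x by ring. ring.
  - change (ffR x (S k + l)) with (x * ffR (x - 1) (k + l)). rewrite IHk.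
    change (ffR x (S k)) with (x * ffR (x - 1) k). rewrite S_INR.
    replace (x - 1 - INR k) with (x - (INR k + 1)) by ring. ring.
Qed.

Lemma ffR_zero n : forall j, (n < j)%nat -> ffR (INR n) j = 0.
Proof.
  induction n; intros j H.
  - destruct j; [lia|]. simpl. ring.
  - destruct j; [lia|]. change (ffR (INR (S n)) (S j)) with (INR (S n) * ffR (INR (S n) - 1) j).
    rewrite S_INR. replace (INR n + 1 - 1) with (INR n) by ring. rewrite IHn by lia. ring.
Qed.

Lemma ffR_fact j : forall n, (j <= n)%nat -> ffR (INR n) j = INR (fact n) / INR (fact (n - j)).
Proof.
  induction j; intros n H.
  - simpl. rewrite Nat.sub_0_r. field. apply INR_fact_neq_0.
  - destruct n; [lia|]. change (ffR (INR (S n)) (S j)) with (INR (S n) * ffR (INR (S n) - 1) j).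
    replace (INR (S n) - 1) with (INR n) by (rewrite S_INR; ring).
    rewrite IHj by lia. simpl (S n - S j)%nat. rewrite fact_simpl, mult_INR. field. apply INR_fact_neq_0.
Qed.

Lemma S1_eq n : (6 <= n)%nat ->
  rsum (fun k => rsum (fun l => ffR (INR n) k * ffR (INR n - INR k) l) (seq 3 (n - 2))) (seq 3 (n - 2)) =
  rsum (fun k => rsum (fun l => INR (fact n) / INR (fact (n - k - l))) (seq 3 (n - k - 2))) (seq 3 (n - 5)).
Proof.
  intros Hn.
  assert (Es : forall F : nat -> R, rsum F (seq 3 (n - 2)) = rsum F (seq 3 (n - 5)) + rsum F (seq (3 + (n - 5)) 3)).
  { intro F. rewrite <- rsum_app, <- seq_app. f_equal. f_equal. lia. }
  rewrite (Es (fun k => rsum (fun l => ffR (INR n) k * ffR (INR n - INR k) l) (seq 3 (n - 2)))).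
  rewrite (rsum_ext_in (fun k => rsum _ _) (fun _ => 0) (seq (3 + (n - 5)) 3)).
  2:{ intros k Hk. apply in_seq in Hk. rewrite <- rsum_zero with (l := seq 3 (n - 2)).
      apply rsum_ext_in; intros l Hl. apply in_seq in Hl. rewrite <- ffR_add. apply ffR_zero; lia. }
  rewrite rsum_zero, Rplus_0_r. apply rsum_ext_in; intros k Hk. apply in_seq in Hk.
  replace (n - 2)%nat with ((n - k - 2) + k)%nat by lia. rewrite seq_app, rsum_app.
  rewrite (rsum_ext_in (fun l => _ * _) (fun _ => 0) (seq (3 + (n - k - 2)) k)).
  2:{ intros l Hl. apply in_seq in Hl. rewrite <- ffR_add. apply ffR_zero; lia. }
  rewrite rsum_zero, Rplus_0_r. apply rsum_ext_in; intros l Hl. apply in_seq in Hl.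
  rewrite <- ffR_add, ffR_fact by lia. rewrite Nat.sub_add_distr. reflexivity.
Qed.

Lemma diag m (g : nat -> R) :
  rsum (fun k => rsum (fun l => g (k + l)%nat) (seq 3 (m + 3 - k))) (seq 3 m) =
  rsum (fun i => g i * INR (i - 5)) (seq 6 m).
Proof.
  induction m.
  - reflexivity.
  - rewrite !seq_S, !rsum_app. rewrite <- IHm.
    rewrite (rsum_ext_in _ (fun k => rsum (fun l => g (k + l)%nat) (seq 3 (m + 3 - k)) + g (m + 6)%nat) (seq 3 m)).
    2:{ intros k Hk. apply in_seq in Hk. replace (S m + 3 - k)%nat with (S (m + 3 - k)) by lia.
        rewrite seq_S, rsum_app. simpl. replace (k + S (S (S (m + 3 - k))))%nat with (m + 6)%nat by lia. ring. }
    rewrite rsum_plus, rsum_const, length_seq.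
    replace (S m + 3 - (3 + m))%nat with 1%nat by lia. rewrite rsum_cons, rsum_nil, rsum_cons, rsum_nil.
    replace (3 + m + 3)%nat with (m + 6)%nat by lia. replace (6 + m - 5)%nat with (S m) by lia.
    replace (6 + m)%nat with (m + 6)%nat by lia. replace (S m + 3 - (3 + m))%nat with 1%nat by lia. cbn [seq]. rewrite rsum_cons, rsum_nil. replace (3 + m + 3)%nat with (m + 6)%nat by lia. rewrite S_INR; ring.
Qed.

Lemma S1_S2 n : (6 <= n)%nat ->
  rsum (fun k => rsum (fun l => INR (fact n) / INR (fact (n - k - l))) (seq 3 (n - k - 2))) (seq 3 (n - 5)) =
  rsum (fun i => INR (fact n) / INR (fact (n - i)) * INR (i - 5)) (seq 6 (n - 5)).
Proof.
  intros Hn. rewrite <- (diag (n - 5) (fun i => INR (fact n) / INR (fact (n - i)))).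
  apply rsum_ext_in; intros k Hk. apply in_seq in Hk.
  replace (n - 5 + 3 - k)%nat with (n - k - 2)%nat by lia.
  apply rsum_ext; intro l. rewrite Nat.sub_add_distr. reflexivity.
Qed.

Definition nx (k i : nat) : nat := if Nat.eqb (S i) k then 0%nat else S i.
Definition pv (k i : nat) : nat := if Nat.eqb i 0 then (k - 1)%nat else (i - 1)%nat.
Definition cls (k i j : nat) : nat :=
  if Nat.eqb i j then 0%nat else if Nat.eqb j (nx k i) then 1%nat
  else if Nat.eqb i (nx k j) then 2%nat else 3%nat.

Ltac eqbs2 := repeat (match goal with |- context [Nat.eqb ?x ?y] => destruct (Nat.eqb_spec x y) end; cbv beta iota).

Lemma nx_lt k i : (i < k)%nat -> (nx k i < k)%nat.
Proof. unfold nx; destruct (Nat.eqb_spec (S i) k); lia. Qed.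
Lemma nx_neq k i : (2 <= k)%nat -> (i < k)%nat -> nx k i <> i.
Proof. unfold nx; destruct (Nat.eqb_spec (S i) k); lia. Qed.
Lemma nx_nx_neq k i : (3 <= k)%nat -> (i < k)%nat -> nx k (nx k i) <> i.
Proof. intros. unfold nx; destruct (Nat.eqb_spec (S i) k); cbv beta iota; eqbs2; lia. Qed.
Lemma nx_inj k i j : (i < k)%nat -> (j < k)%nat -> nx k i = nx k j -> i = j.
Proof. unfold nx; destruct (Nat.eqb_spec (S i) k), (Nat.eqb_spec (S j) k); lia. Qed.

Lemma cls_sum k i (h : nat -> R) : (3 <= k)%nat -> (i < k)%nat -> h 3%nat = 0 ->
  rsum (fun j => h (cls k i j)) (seq 0 k) = h 0%nat + h 1%nat + h 2%nat.
Proof.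
  intros Hk Hi H3.
  rewrite (rsum_ext_in _ (fun j => (if Nat.eqb j i then h 0%nat else 0) + (if Nat.eqb j (nx k i) then h 1%nat else 0)
                                 + (if Nat.eqb j (pv k i) then h 2%nat else 0))).
  - rewrite !rsum_plus, !rsum_ind_eq; auto. 2: apply nx_lt; auto. unfold pv; destruct (Nat.eqb_spec i 0); lia.
  - intros j Hj. apply in_seq in Hj. unfold cls, nx, pv.
    destruct (Nat.eqb_spec (S i) k), (Nat.eqb_spec (S j) k), (Nat.eqb_spec i 0); cbv beta iota; eqbs2;
    try lia; try rewrite H3; ring.
Qed.

Definition sF (Y : nat -> pt) : R := if Req_EM_T (eps (Y 0%nat) (Y 1%nat) (Y 2%nat) (Y 3%nat)) 0 then 0 else 1.
Definition uF (Y : nat -> pt) : R := eps (Y 0%nat) (Y 1%nat) (Y 2%nat) (Y 3%nat) * eps (Y 0%nat) (Y 1%nat) (Y 3%nat) (Y 4%nat).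
Definition vF (Y : nat -> pt) : R := eps (Y 0%nat) (Y 1%nat) (Y 3%nat) (Y 4%nat) * eps (Y 1%nat) (Y 2%nat) (Y 4%nat) (Y 5%nat).

Definition wv (s u v : R) (a b : nat) : R :=
  match a, b with
  | O, O => s
  | O, S O | O, S (S O) | S O, O | S (S O), O => u
  | S O, S O | S O, S (S O) | S (S O), S O | S (S O), S (S O) => v
  | _, _ => 0
  end.

Lemma dep_sF : dep_lt 4 sF.
Proof. intros Y Y' H. unfold sF. rewrite !H by lia. reflexivity. Qed.
Lemma dep_uF : dep_lt 5 uF.
Proof. intros Y Y' H. unfold uF. rewrite !H by lia. reflexivity. Qed.
Lemma dep_vF : dep_lt 6 vF.
Proof. intros Y Y' H. unfold vF. rewrite !H by lia. reflexivity. Qed.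

Lemma use_list L n vs m H F : L <> [] -> NoDup vs -> (forall v, In v vs -> (v < n)%nat) ->
  length vs = m -> dep_lt m H -> (forall X, F X = H (fun t => X (nth t vs 0%nat))) ->
  pavg L n F = pavg L m H.
Proof. intros HL Hnd Hv Hl Hd HF. subst m. rewrite (pavg_ext _ _ _ _ HF). apply pavg_list; auto. Qed.

Lemma nodup2 (a b : nat) : a <> b -> NoDup [a; b].
Proof. intros. constructor. intros [E|[]]; auto. constructor; [intros []|constructor]. Qed.
Lemma nodup3 (a b c : nat) : a <> b -> a <> c -> b <> c -> NoDup [a; b; c].
Proof. intros. constructor. intros [E|[E|[]]]; auto. apply nodup2; auto. Qed.

Lemma nodup_mixed (c c' I1 I2 : list nat) : NoDup c -> NoDup c' -> (forall v, In v c -> ~ In v c') ->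
  NoDup I1 -> NoDup I2 -> (forall t, In t I1 -> (t < length c)%nat) -> (forall t, In t I2 -> (t < length c')%nat) ->
  NoDup (map (fun t => nth t c 0%nat) I1 ++ map (fun t => nth t c' 0%nat) I2).
Proof.
  intros Hc Hc' Hd H1 H2 B1 B2. apply NoDup_app.
  - apply NoDup_map_NoDup_ForallPairs; auto. intros a b Ha Hb E.
    apply (proj1 (NoDup_nth c 0%nat) Hc); auto.
  - apply NoDup_map_NoDup_ForallPairs; auto. intros a b Ha Hb E.
    apply (proj1 (NoDup_nth c' 0%nat) Hc'); auto.
  - intros v Hv Hv'. apply in_map_iff in Hv as [a [Ea Ha]]. apply in_map_iff in Hv' as [b [Eb Hb]].
    apply (Hd v). rewrite <- Ea; apply nth_In; auto. rewrite <- Eb; apply nth_In; auto.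
Qed.

Definition T (c c' : list nat) (i i' : nat) (X : nat -> pt) : R :=
  eps (X (nth i c 0%nat)) (X (nth (nx (length c) i) c 0%nat)) (X (nth i' c' 0%nat)) (X (nth (nx (length c') i') c' 0%nat)).

Lemma cls_spec k i j : (i < k)%nat -> (j < k)%nat ->
  (cls k i j = 0%nat -> j = i) /\ (cls k i j = 1%nat -> j = nx k i) /\ (cls k i j = 2%nat -> i = nx k j) /\
  (cls k i j = 3%nat -> i <> j /\ j <> nx k i /\ i <> nx k j) /\ (cls k i j <= 3)%nat.
Proof.
  intros. unfold cls. destruct (Nat.eqb_spec i j); [repeat split; intros; lia|].
  destruct (Nat.eqb_spec j (nx k i)); [repeat split; intros; lia|].
  destruct (Nat.eqb_spec i (nx k j)); repeat split; intros; lia.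
Qed.

Lemma swap_a a b : swap a b a = b.
Proof. unfold swap. rewrite Nat.eqb_refl. reflexivity. Qed.
Lemma swap_b a b : swap a b b = a.
Proof. unfold swap. destruct (Nat.eqb_spec b a); subst; auto. rewrite Nat.eqb_refl. reflexivity. Qed.
Lemma swap_o a b v : v <> a -> v <> b -> swap a b v = v.
Proof. unfold swap. intros. destruct (Nat.eqb_spec v a); [lia|]. destruct (Nat.eqb_spec v b); [lia|]. auto. Qed.

Lemma nth_neq (c : list nat) a b : NoDup c -> (a < length c)%nat -> (b < length c)%nat -> a <> b ->
  nth a c 0%nat <> nth b c 0%nat.
Proof. intros Hc Ha Hb Hab E. apply Hab. apply (proj1 (NoDup_nth c 0%nat) Hc); auto. Qed.

Lemma nth_disj (c c' : list nat) a b : (forall v, In v c -> ~ In v c') -> (a < length c)%nat -> (b < length c')%nat ->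
  nth a c 0%nat <> nth b c' 0%nat.
Proof. intros Hd Ha Hb E. apply (Hd (nth a c 0%nat)). apply nth_In; auto. rewrite E; apply nth_In; auto. Qed.

Lemma dep_T n c c' i j i' j' : (forall v, In v c -> (v < n)%nat) -> (forall v, In v c' -> (v < n)%nat) ->
  (i < length c)%nat -> (j < length c)%nat -> (i' < length c')%nat -> (j' < length c')%nat -> (2 <= length c)%nat -> (2 <= length c')%nat ->
  dep_lt n (fun X => T c c' i i' X * T c c' j j' X).
Proof.
  intros H1 H2 Hi Hj Hi' Hj' Hk Hl Y Y' HY. unfold T.
  rewrite !HY; auto; first [apply H1, nth_In | apply H2, nth_In]; auto; apply nx_lt; auto.
Qed.

Ltac ne_tac := solve [ apply not_eq_sym, nth_disj; auto; apply nx_lt; lia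
                     | apply nth_disj; auto; apply nx_lt; lia
                     | apply not_eq_sym, nth_disj; auto
                     | apply nth_disj; auto
                     | apply nth_neq; auto; try (apply nx_lt; lia); first [lia | let C := fresh "C" in intro C; apply nx_inj in C; lia] ].

Lemma zero_c L n c c' i j i' j' : L <> [] -> NoDup c -> (forall v, In v c -> ~ In v c') ->
  (forall v, In v c -> (v < n)%nat) -> (forall v, In v c' -> (v < n)%nat) ->
  (3 <= length c)%nat -> (3 <= length c')%nat ->
  (i < length c)%nat -> (j < length c)%nat -> (i' < length c')%nat -> (j' < length c')%nat ->
  cls (length c) i j = 3%nat -> pavg L n (fun X => T c c' i i' X * T c c' j j' X) = 0.
Proof.
  intros HL Hc Hd H1 H2 Hk Hl Hi Hj Hi' Hj' E.
  destruct (cls_spec (length c) i j Hi Hj) as [_ [_ [_ [E3 _]]]]. destruct (E3 E) as [n1 [n2 n3]].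
  set (k := length c) in *.
  assert (Hni : (nx k i < k)%nat) by (apply nx_lt; auto).
  assert (Hnj : (nx k j < k)%nat) by (apply nx_lt; auto).
  apply (pavg_antisym L n (nth i c 0%nat) (nth (nx k i) c 0%nat)); auto.
  - apply H1, nth_In; auto.
  - apply H1, nth_In; auto.
  - apply dep_T; auto; lia.
  - intro X. unfold T. fold k. rewrite swap_a, swap_b.
    rewrite !swap_o by ne_tac. rewrite eps_antisym1. ring.
Qed.

Lemma zero_c' L n c c' i j i' j' : L <> [] -> NoDup c' -> (forall v, In v c -> ~ In v c') ->
  (forall v, In v c -> (v < n)%nat) -> (forall v, In v c' -> (v < n)%nat) ->
  (3 <= length c)%nat -> (3 <= length c')%nat ->
  (i < length c)%nat -> (j < length c)%nat -> (i' < length c')%nat -> (j' < length c')%nat ->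
  cls (length c') i' j' = 3%nat -> pavg L n (fun X => T c c' i i' X * T c c' j j' X) = 0.
Proof.
  intros HL Hc Hd H1 H2 Hk Hl Hi Hj Hi' Hj' E.
  destruct (cls_spec (length c') i' j' Hi' Hj') as [_ [_ [_ [E3 _]]]]. destruct (E3 E) as [n1 [n2 n3]].
  set (k := length c') in *.
  assert (Hni : (nx k i' < k)%nat) by (apply nx_lt; auto).
  assert (Hnj : (nx k j' < k)%nat) by (apply nx_lt; auto).
  apply (pavg_antisym L n (nth i' c' 0%nat) (nth (nx k i') c' 0%nat)); auto.
  - apply H2, nth_In; auto.
  - apply H2, nth_In; auto.
  - apply dep_T; auto; lia.
  - intro X. unfold T. fold k. rewrite swap_a, swap_b.
    rewrite !swap_o by ne_tac. rewrite eps_antisym2. ring.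
Qed.

Lemma in_mixed n (c c' I1 I2 : list nat) : (forall v, In v c -> (v < n)%nat) -> (forall v, In v c' -> (v < n)%nat) ->
  (forall t, In t I1 -> (t < length c)%nat) -> (forall t, In t I2 -> (t < length c')%nat) ->
  forall v, In v (map (fun t => nth t c 0%nat) I1 ++ map (fun t => nth t c' 0%nat) I2) -> (v < n)%nat.
Proof.
  intros H1 H2 B1 B2 v Hv. apply in_app_or in Hv as [Hv|Hv]; apply in_map_iff in Hv as [t [<- Ht]].
  apply H1, nth_In; auto. apply H2, nth_In; auto.
Qed.

Ltac idx_ne := first [ apply nx_neq | apply not_eq_sym; apply nx_neq | apply nx_nx_neq | apply not_eq_sym; apply nx_nx_neq ];
  repeat apply nx_lt; lia.
Ltac idx_nodup := first [ apply nodup2; idx_ne | apply nodup3; idx_ne ].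
Ltac idx_bnd := match goal with |- forall _ : nat, In _ _ -> _ =>
  let t := fresh "t" in let Ht := fresh "Ht" in intros t Ht;
  repeat (destruct Ht as [<-|Ht]; [repeat apply nx_lt; lia|]); destruct Ht end.

Lemma use_xy L n c c' I1 I2 m H F : L <> [] -> NoDup c -> NoDup c' -> (forall v, In v c -> ~ In v c') ->
  (forall v, In v c -> (v < n)%nat) -> (forall v, In v c' -> (v < n)%nat) ->
  NoDup I1 -> NoDup I2 -> (forall t, In t I1 -> (t < length c)%nat) -> (forall t, In t I2 -> (t < length c')%nat) ->
  (length I1 + length I2 = m)%nat -> dep_lt m H ->
  (forall X, F X = H (fun t => X (nth t (map (fun t => nth t c 0%nat) I1 ++ map (fun t => nth t c' 0%nat) I2) 0%nat))) ->
  pavg L n F = pavg L m H.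
Proof.
  intros HL Hc Hc' Hd Hn1 Hn2 HI1 HI2 B1 B2 Hm Hdep HF.
  apply (use_list L n (map (fun t => nth t c 0%nat) I1 ++ map (fun t => nth t c' 0%nat) I2) m H F); auto.
  - apply nodup_mixed; auto.
  - intros v Hv. apply (in_mixed n c c' I1 I2 Hn1 Hn2 B1 B2 v Hv).
  - rewrite length_app, !length_map; auto.
Qed.

Lemma use_yx L n c c' I1 I2 m H F : L <> [] -> NoDup c -> NoDup c' -> (forall v, In v c -> ~ In v c') ->
  (forall v, In v c -> (v < n)%nat) -> (forall v, In v c' -> (v < n)%nat) ->
  NoDup I1 -> NoDup I2 -> (forall t, In t I1 -> (t < length c)%nat) -> (forall t, In t I2 -> (t < length c')%nat) ->
  (length I2 + length I1 = m)%nat -> dep_lt m H ->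
  (forall X, F X = H (fun t => X (nth t (map (fun t => nth t c' 0%nat) I2 ++ map (fun t => nth t c 0%nat) I1) 0%nat))) ->
  pavg L n F = pavg L m H.
Proof.
  intros HL Hc Hc' Hd Hn1 Hn2 HI1 HI2 B1 B2 Hm Hdep HF.
  apply (use_xy L n c' c I2 I1 m H F); auto.
  intros v Hv Hv'. apply (Hd v); auto.
Qed.

Lemma u_sym A B C P Q : eps A B P Q * eps B C P Q = eps P Q A B * eps P Q B C.
Proof. rewrite (eps_sym A B P Q), (eps_sym B C P Q). reflexivity. Qed.
Lemma v_flip A B C P Q R : eps A B Q R * eps B C P Q = eps A B R Q * eps B C Q P.
Proof. rewrite (eps_antisym2 A B R Q), (eps_antisym2 B C Q P). ring. Qed.

Lemma term_val L n c c' i j i' j' : L <> [] -> NoDup c -> NoDup c' -> (forall v, In v c -> ~ In v c') ->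
  (forall v, In v c -> (v < n)%nat) -> (forall v, In v c' -> (v < n)%nat) ->
  (3 <= length c)%nat -> (3 <= length c')%nat ->
  (i < length c)%nat -> (j < length c)%nat -> (i' < length c')%nat -> (j' < length c')%nat ->
  pavg L n (fun X => T c c' i i' X * T c c' j j' X) =
  wv (pavg L 4 sF) (pavg L 5 uF) (pavg L 6 vF) (cls (length c) i j) (cls (length c') i' j').
Proof.
  intros HL Hc Hc' Hd H1 H2 Hk Hl Hi Hj Hi' Hj'.
  destruct (cls_spec (length c) i j Hi Hj) as [C0 [C1 [C2 [_ C4]]]].
  destruct (cls_spec (length c') i' j' Hi' Hj') as [D0 [D1 [D2 [_ D4]]]].
  destruct (cls (length c) i j) as [|[|[|[|a]]]] eqn:Ea; [| | | |lia];
  [| | |rewrite zero_c; auto; destruct (cls (length c') i' j'); reflexivity].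
  all: destruct (cls (length c') i' j') as [|[|[|[|b]]]] eqn:Eb; [| | | |lia];
  [| | |rewrite zero_c'; auto; reflexivity].
  all: cbn [wv]; unfold T; set (k := length c) in *; set (l := length c') in *.
  - rewrite (C0 eq_refl), (D0 eq_refl).
    apply (use_xy L n c c' [i; nx k i] [i'; nx l i']); auto; try idx_nodup; try idx_bnd.
    all: try apply dep_sF. all: try (intro X; unfold sF; simpl; apply eps_sq).
  - rewrite (C0 eq_refl), (D1 eq_refl).
    apply (use_xy L n c c' [i; nx k i] [i'; nx l i'; nx l (nx l i')]); auto; try idx_nodup; try idx_bnd.
    all: try apply dep_uF. all: try (intro X; unfold uF; simpl; reflexivity).
  - rewrite (C0 eq_refl), (D2 eq_refl).
    apply (use_xy L n c c' [i; nx k i] [j'; nx l j'; nx l (nx l j')]); auto; try idx_nodup; try idx_bnd.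
    all: try apply dep_uF. all: try (intro X; unfold uF; simpl; ring).
  - rewrite (C1 eq_refl), (D0 eq_refl).
    apply (use_yx L n c c' [i; nx k i; nx k (nx k i)] [i'; nx l i']); auto; try idx_nodup; try idx_bnd.
    all: try apply dep_uF. all: try (intro X; unfold uF; simpl; apply u_sym).
  - rewrite (C1 eq_refl), (D1 eq_refl).
    apply (use_xy L n c c' [i; nx k i; nx k (nx k i)] [i'; nx l i'; nx l (nx l i')]); auto; try idx_nodup; try idx_bnd.
    all: try apply dep_vF. all: try (intro X; unfold vF; simpl; reflexivity).
  - rewrite (C1 eq_refl), (D2 eq_refl).
    apply (use_xy L n c c' [i; nx k i; nx k (nx k i)] [nx l (nx l j'); nx l j'; j']); auto; try idx_nodup; try idx_bnd.
    all: try apply dep_vF. all: try (intro X; unfold vF; simpl; first [apply v_flip | rewrite Rmult_comm; apply v_flip]).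
  - rewrite (C2 eq_refl), (D0 eq_refl).
    apply (use_yx L n c c' [j; nx k j; nx k (nx k j)] [i'; nx l i']); auto; try idx_nodup; try idx_bnd.
    all: try apply dep_uF. all: try (intro X; unfold uF; simpl; rewrite Rmult_comm; apply u_sym).
  - rewrite (C2 eq_refl), (D1 eq_refl).
    apply (use_xy L n c c' [j; nx k j; nx k (nx k j)] [nx l (nx l i'); nx l i'; i']); auto; try idx_nodup; try idx_bnd.
    all: try apply dep_vF. all: try (intro X; unfold vF; simpl; first [apply v_flip | rewrite Rmult_comm; apply v_flip]).
  - rewrite (C2 eq_refl), (D2 eq_refl).
    apply (use_xy L n c c' [j; nx k j; nx k (nx k j)] [j'; nx l j'; nx l (nx l j')]); auto; try idx_nodup; try idx_bnd.
    all: try apply dep_vF. all: try (intro X; unfold vF; simpl; ring).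
Qed.

Lemma combine_map (l1 l2 : list nat) : length l1 = length l2 ->
  combine l1 l2 = map (fun i => (nth i l1 0%nat, nth i l2 0%nat)) (seq 0 (length l1)).
Proof.
  revert l2; induction l1 as [|a l1 IH]; intros l2 H; [reflexivity|].
  destruct l2 as [|b l2]; [discriminate|]. simpl in H.
  simpl combine. rewrite IH by lia. simpl length. rewrite <- cons_seq. simpl map at 2. f_equal. rewrite <- seq_shift, map_map. reflexivity.
Qed.

Lemma cyc_edges_eq c : c <> [] ->
  cyc_edges c = map (fun i => (nth i c 0%nat, nth (nx (length c) i) c 0%nat)) (seq 0 (length c)).
Proof.
  intros Hc. destruct c as [|a r]; [congruence|]. unfold cyc_edges. simpl tl. simpl firstn.
  rewrite combine_map by (simpl; rewrite length_app; simpl; lia).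
  apply map_ext_in. intros i Hi. apply in_seq in Hi. simpl length in *. f_equal.
  unfold nx. destruct (Nat.eqb_spec (S i) (S (length r))).
  - assert (i = length r) by lia. subst. rewrite app_nth2 by lia. rewrite Nat.sub_diag. reflexivity.
  - rewrite app_nth1 by lia. reflexivity.
Qed.

Lemma lk_eq X c c' : c <> [] -> c' <> [] ->
  lk X c c' = / 2 * rsum (fun i => rsum (fun i' => T c c' i i' X) (seq 0 (length c'))) (seq 0 (length c)).
Proof.
  intros H1 H2. unfold lk. rewrite !cyc_edges_eq by auto. rewrite rsum_map. f_equal.
  apply rsum_ext; intro i. rewrite rsum_map. reflexivity.
Qed.

Lemma wv_3 s u v a : wv s u v a 3 = 0.
Proof. destruct a as [|[|[|a]]]; reflexivity. Qed.
Lemma wv_3' s u v b : wv s u v 3 b = 0.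
Proof. reflexivity. Qed.

Definition Wsum (s u v : R) : R :=
  (wv s u v 0 0 + wv s u v 0 1 + wv s u v 0 2) + (wv s u v 1 0 + wv s u v 1 1 + wv s u v 1 2)
  + (wv s u v 2 0 + wv s u v 2 1 + wv s u v 2 2).

Lemma pair_val L n c c' : L <> [] -> NoDup c -> NoDup c' -> (forall v, In v c -> ~ In v c') ->
  (forall v, In v c -> (v < n)%nat) -> (forall v, In v c' -> (v < n)%nat) ->
  (3 <= length c)%nat -> (3 <= length c')%nat ->
  pavg L n (fun X => lk X c c' ^ 2) =
  / 4 * (INR (length c) * INR (length c') * Wsum (pavg L 4 sF) (pavg L 5 uF) (pavg L 6 vF)).
Proof.
  intros HL Hc Hc' Hd H1 H2 Hk Hl.
  assert (Ec : c <> []) by (intro E; subst; simpl in Hk; lia).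
  assert (Ec' : c' <> []) by (intro E; subst; simpl in Hl; lia).
  set (k := length c) in *. set (l := length c') in *.
  set (s := pavg L 4 sF). set (u := pavg L 5 uF). set (v := pavg L 6 vF).
  rewrite (pavg_ext _ _ _ (fun X => / 4 * rsum (fun i => rsum (fun j => rsum (fun i' => rsum (fun j' =>
      T c c' i i' X * T c c' j j' X) (seq 0 l)) (seq 0 l)) (seq 0 k)) (seq 0 k))).
  2:{ intro X. rewrite lk_eq by auto. fold k l. simpl pow. rewrite Rmult_1_r.
      replace (/ 2 * rsum (fun i => rsum (fun i' => T c c' i i' X) (seq 0 l)) (seq 0 k) *
               (/ 2 * rsum (fun i => rsum (fun i' => T c c' i i' X) (seq 0 l)) (seq 0 k)))
        with (/ 4 * (rsum (fun i => rsum (fun i' => T c c' i i' X) (seq 0 l)) (seq 0 k) *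
                     rsum (fun i => rsum (fun i' => T c c' i i' X) (seq 0 l)) (seq 0 k))) by field.
      f_equal. rewrite rsum_mult. apply rsum_ext; intro i. apply rsum_ext; intro j.
      rewrite rsum_mult. reflexivity. }
  rewrite pavg_scal. f_equal.
  rewrite pavg_rsum.
  rewrite (rsum_ext_in _ (fun i => INR l * Wsum s u v)).
  - rewrite rsum_const, length_seq. ring.
  - intros i Hi. apply in_seq in Hi. rewrite pavg_rsum.
    rewrite (rsum_ext_in _ (fun j => INR l * (wv s u v (cls k i j) 0 + wv s u v (cls k i j) 1 + wv s u v (cls k i j) 2))).
    + rewrite rsum_scal. rewrite (cls_sum k i (fun a => wv s u v a 0 + wv s u v a 1 + wv s u v a 2)) by first [lia | simpl; ring].
      unfold Wsum. ring.
    + intros j Hj. apply in_seq in Hj. rewrite pavg_rsum.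
      rewrite (rsum_ext_in _ (fun i' => wv s u v (cls k i j) 0 + wv s u v (cls k i j) 1 + wv s u v (cls k i j) 2)).
      * rewrite rsum_const, length_seq. reflexivity.
      * intros i' Hi'. apply in_seq in Hi'. rewrite pavg_rsum.
        rewrite (rsum_ext_in _ (fun j' => wv s u v (cls k i j) (cls l i' j'))).
        -- apply (cls_sum l i' (wv s u v (cls k i j))); auto; try lia. apply wv_3.
        -- intros j' Hj'. apply in_seq in Hj'. apply term_val; auto; lia.
Qed.

Lemma total_val L n : L <> [] -> (6 <= n)%nat ->
  pavg L n (sum_sq_lk n) = Wsum (pavg L 4 sF) (pavg L 5 uF) (pavg L 6 vF) / 32 *
  rsum (fun k => rsum (fun l => INR (fact n) / INR (fact (n - k - l))) (seq 3 (n - k - 2))) (seq 3 (n - 5)).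
Proof.
  intros HL Hn. unfold sum_sq_lk. rewrite pavg_rsum.
  set (W := Wsum _ _ _).
  rewrite (rsum_ext_in _ (fun p => / 4 * W * (INR (length (fst p)) * INR (length (snd p))))).
  - rewrite rsum_scal, P_formula, Q_formula, <- S1_eq by auto.
    rewrite (rsum_ext _ (fun k => / 4 * rsum (fun l => ffR (INR n) k * ffR (INR n - INR k) l) (seq 3 (n - 2)))).
    + rewrite rsum_scal. field.
    + intro k. rewrite <- rsum_scal. apply rsum_ext; intro l. field.
  - intros [c c'] Hp. unfold cycle_pairs in Hp. apply filter_In in Hp as [Hp Hb].
    apply in_prod_iff in Hp as [Hc Hc']. simpl in Hb. apply andb_true_iff in Hb as [Hdj _].
    apply cycles_in in Hc as [Cc [Bc _]]. apply cycles_in in Hc' as [Cc' [Bc' _]].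
    apply canon_props in Cc as [Nc Lc]. apply canon_props in Cc' as [Nc' Lc'].
    apply nodupb_iff in Nc. apply nodupb_iff in Nc'. rewrite disj_iff in Hdj.
    simpl fst; simpl snd. rewrite pair_val; auto. unfold W. ring.
Qed.
Lemma Un_cv_ext' (A B : nat -> R) l : (forall n, A n = B n) -> Un_cv A l -> Un_cv B l.
Proof. intros H HA eps He. destruct (HA eps He) as [N HN]. exists N. intros m Hm.
  rewrite <- H. apply HN; auto. Qed.
Lemma Un_cv_const' c : Un_cv (fun _ => c) c.
Proof. intros eps He. exists 0%nat. intros m _. unfold R_dist. rewrite Rminus_diag, Rabs_R0; auto. Qed.
Lemma Un_cv_scal' (A : nat -> R) l c : Un_cv A l -> Un_cv (fun n => c * A n) (c * l).
Proof. intros H. apply CV_mult; auto. apply Un_cv_const'. Qed.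

Theorem mainTheorem2 (n : nat) (s u v : R)
  (hn : (6 <= n)%nat)
  (* 2s = P(eps(A->B, P->Q) <> 0), points A,B,P,Q = 0,1,2,3 *)
  (hs : Expect_is 4 (fun X =>
          if Req_EM_T (eps (X 0%nat) (X 1%nat) (X 2%nat) (X 3%nat)) 0 then 0 else 1)
          (2 * s))
  (* u = E[eps(A->B,P->Q) eps(A->B,Q->R)], points A,B,P,Q,R = 0..4 *)
  (hu : Expect_is 5 (fun X =>
          eps (X 0%nat) (X 1%nat) (X 2%nat) (X 3%nat) *
          eps (X 0%nat) (X 1%nat) (X 3%nat) (X 4%nat)) u)
  (* v = E[eps(A->B,P->Q) eps(B->C,Q->R)], points A,B,C,P,Q,R = 0..5 *)
  (hv : Expect_is 6 (fun X =>
          eps (X 0%nat) (X 1%nat) (X 3%nat) (X 4%nat) *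
          eps (X 1%nat) (X 2%nat) (X 4%nat) (X 5%nat)) v) :
  let q := s + 2 * (u + v) in
  let S1 := rsum (fun k => rsum (fun l => INR (fact n) / INR (fact (n - k - l)))
                              (seq 3 (n - k - 2))) (seq 3 (n - 5)) in
  let S2 := rsum (fun i => INR (fact n) / INR (fact (n - i)) * INR (i - 5))
              (seq 6 (n - 5)) in
  Expect_is n (sum_sq_lk n) (q / 16 * S1) /\ S1 = S2.
Proof.
  intros q S1 S2. split; [|apply S1_S2; auto].
  unfold Expect_is in *.
  change (Un_cv (fun N => ptE (S N) 4 sF) (2 * s)) in hs.
  change (Un_cv (fun N => ptE (S N) 5 uF) u) in hu.
  change (Un_cv (fun N => ptE (S N) 6 vF) v) in hv.
  apply (Un_cv_ext' (fun N => / 32 * S1 * (ptE (S N) 4 sF + (4 * ptE (S N) 5 uF + 4 * ptE (S N) 6 vF)))).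
  - intro N. assert (HN : (0 < S N)%nat) by lia.
    rewrite !(ptE_pavg (S N)) by auto. rewrite total_val; auto using grid_nonempty.
    unfold Wsum, wv. unfold S1. field.
  - replace (q / 16 * S1) with (/ 32 * S1 * (2 * s + (4 * u + 4 * v))) by (unfold q; field).
    apply Un_cv_scal'. apply CV_plus; auto. apply CV_plus; apply Un_cv_scal'; auto.
Qed.
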